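(* Let $G=(V,E,p,(V_{E},V_{O}))$ be a parity game, let $D\subseteq V$ be an Odd-dominion of $G$, and let $k$ be an odd number such that $p(w)\ge k$ for all $w\in D$. Let $v\in D$ with $p(v)=k$, and let $\sigma_D$ be a strategy of Odd that is winning for Odd on $D$ and closed on $D$. Let $A=\mathrm{Attr}^{\ge k}_{O}(\{v\})$ and let $\sigma_{Attr}$ be the strategy of Odd defined on $(A\setminus\{v\})\cap V_{O}$ attracting towards $v$. Let $\sigma$ be the strategy defined on $\mathrm{dom}(\sigma_{Attr})\cup\mathrm{dom}(\sigma_D)$ as $\sigma_{Attr}(w)$ for $w\in\mathrm{dom}(\sigma_{Attr})$ and as $\sigma_D(w)$ for $w\in\mathrm{dom}(\sigma_D)\setminus\mathrm{dom}(\sigma_{Attr})$. Then $\sigma$, on $D\cup A$, is winning for Odd, and plays consistent with it starting in $D\cup A$ only visit priorities greater than or equal to $k$.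
   Context: A parity game $G=(V,E,p,(V_{E},V_{O}))$: finite $V$ partitioned into $V_{E}$ (Even) and $V_{O}$ (Odd), total edge relation $E$, priorities $p:V\to\mathbb{N}$; $\mathrm{post}(v)=\{w:(v,w)\in E\}$, $V_{\ge k}=\{v:p(v)\ge k\}$. Plays are infinite paths; Even wins iff the least priority occurring infinitely often is even. A set $D$ is an Odd-dominion if Odd has a strategy such that every play starting in $D$ consistent with it is won by Odd and stays in $D$; a strategy is closed on $D$ if all consistent plays from $D$ stay in $D$. Guarded attractor: for a priority $k$ and $U\subseteq V_{\ge k}$, $\mathrm{Attr}^{\ge k}_{O}(U)$ is the least set $A$ with $U\subseteq A\subseteq V_{\ge k}$ such that every $u\in V_{O}\cap V_{\ge k}$ with $\mathrm{post}(u)\cap A\ne\emptyset$ is in $A$, and every $u\in V_{E}\cap V_{\ge k}$ with $\mathrm{post}(u)\subseteq A$ is in $A$. Computing $A$ as the limit of the increasing chain $A_0=U$, $A_{j+1}=A_j\cup\{$vertices added by the rules from $A_j\}$, the strategy attracting towards $U$ maps each $u\in (A\setminus U)\cap V_{O}$ first added in $A_{j+1}$ to a successor in $A_j$. *)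

(* Defs.v *)
(* A parity game is given by a finite vertex type V, an edge
   relation E : rel V (assumed total), priorities p : V -> nat, and the set
   VE : {set V} of Even's vertices; Odd's vertices are ~: VE. *)
From mathcomp Require Import all_boot.
Set Implicit Arguments. Unset Strict Implicit. Unset Printing Implicit Defensive.

Section ParityGames.
Variable V : finType.
Variable E : rel V.
Variable p : V -> nat.
Variable VE : {set V}.

Definition total_edges := forall v : V, exists w, E v w.

Definition is_play (pi : nat -> V) := forall n, E (pi n) (pi n.+1).

Definition inf_often (pi : nat -> V) (P : V -> Prop) :=
  forall N, exists n, N <= n /\ P (pi n).

Definition odd_wins (pi : nat -> V) :=
  exists m, odd m /\ inf_often pi (fun w => p w = m) /\
    forall j, inf_often pi (fun w => p w = j) -> m <= j.

(* (partial) strategies of Odd: dom(sigma) = {u | sigma u <> None} *)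
Definition odd_strategy (sigma : V -> option V) :=
  forall u w, sigma u = Some w -> u \notin VE /\ E u w.

Definition consistent (sigma : V -> option V) (pi : nat -> V) :=
  forall n w, pi n \notin VE -> sigma (pi n) = Some w -> pi n.+1 = w.

Definition winning_on (sigma : V -> option V) (D : {set V}) :=
  forall pi, is_play pi -> consistent sigma pi -> pi 0 \in D -> odd_wins pi.

Definition closed_on (sigma : V -> option V) (D : {set V}) :=
  forall pi, is_play pi -> consistent sigma pi -> pi 0 \in D ->
    forall n, pi n \in D.

Definition odd_dominion (D : {set V}) :=
  exists sigma, odd_strategy sigma /\ winning_on sigma D /\ closed_on sigma D.

(* guarded attractor Attr^{>= k}_O(U), as the limit of the increasing chain *)
Definition attr_step (k : nat) (A : {set V}) : {set V} :=
  A :|: [set u | (k <= p u) &&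
          (((u \notin VE) && [exists w, E u w && (w \in A)]) ||
           ((u \in VE) && [forall w, E u w ==> (w \in A)]))].

Definition attr_chain (k : nat) (U : {set V}) (j : nat) : {set V} :=
  iter j (attr_step k) U.

Definition attr (k : nat) (U : {set V}) : {set V} := attr_chain k U #|V|.

Definition attracting_strategy (k : nat) (U : {set V}) (sigma : V -> option V) :=
  (forall u, sigma u <> None -> u \in (attr k U :\: U) :&: ~: VE) /\
  (forall j u, u \notin VE -> u \in attr_chain k U j.+1 -> u \notin attr_chain k U j ->
     exists w, sigma u = Some w /\ E u w /\ w \in attr_chain k U j).

Definition combine (s1 s2 : V -> option V) : V -> option V :=
  fun w => match s1 w with Some x => Some x | None => s2 w end.

End ParityGames.

(* Main.v *)
Require Import Defs.
From mathcomp Require Import all_boot.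
From mathcomp Require Import zify.
From Stdlib Require Import Classical.

Set Implicit Arguments.
Section S.
Variables (V : finType) (E : rel V) (p : V -> nat) (VE : {set V}) (k : nat) (v : V).
Local Notation ch := (attr_chain E p VE k [set v]).

Lemma chS j : ch j.+1 = attr_step E p VE k (ch j). Proof. by []. Qed.

Lemma ch_step j u : u \in ch j.+1 -> u \notin ch j ->
  (k <= p u) && (((u \notin VE) && [exists w, E u w && (w \in ch j)]) ||
           ((u \in VE) && [forall w, E u w ==> (w \in ch j)])).
Proof. rewrite chS /attr_step inE => /orP[->//|]; by rewrite inE. Qed.

Lemma ch_prio j u : u \in ch j -> u = v \/ k <= p u.
Proof.
elim: j u => [|j IH] u.
  by rewrite /attr_chain /= inE => /eqP; left.
move=> H; case: (boolP (u \in ch j)) => [/IH//|Hn].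
by right; case/andP: (ch_step H Hn).
Qed.

Lemma ch_rank j u : u \in ch j -> u != v -> exists r, u \in ch r.+1 /\ u \notin ch r.
Proof.
elim: j => [|j IH].
  by rewrite /attr_chain /= inE => ->.
move=> H Hv; case: (boolP (u \in ch j)) => [Hj|Hn]; [exact: IH|by exists j].
Qed.
End S.
Arguments ch_step {V E p VE k v j u}.
Arguments ch_prio {V E p VE k v j u}.
Arguments ch_rank {V E p VE k v j u}.

Theorem lemma4 (V : finType) (E : rel V) (p : V -> nat) (VE : {set V})
  (Htot : total_edges E)
  (D : {set V}) (HD : odd_dominion E p VE D)
  (k : nat) (Hk : odd k) (HDk : forall w, w \in D -> k <= p w)
  (v : V) (HvD : v \in D) (Hpv : p v = k)
  (sigmaD : V -> option V) (HsD : odd_strategy E VE sigmaD)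
  (HsDwin : winning_on E p VE sigmaD D) (HsDcl : closed_on E VE sigmaD D)
  (sigmaA : V -> option V) (HsA : attracting_strategy E p VE k [set v] sigmaA) :
  let A := attr E p VE k [set v] in
  let sigma := combine sigmaA sigmaD in
  winning_on E p VE sigma (D :|: A) /\
  (forall pi, is_play E pi -> consistent VE sigma pi -> pi 0 \in D :|: A ->
     forall n, k <= p (pi n)).
Proof.
cbv zeta.
pose ch := attr_chain E p VE k [set v].
pose nxt u := if sigmaD u is Some w then w else xchoose (Htot u).
have HnE u : E u (nxt u).
  rewrite /nxt; case Hs: (sigmaD u) => [w|]; first by case: (HsD _ _ Hs).
  exact: xchooseP.
have Dstep u w : u \in D -> E u w ->
    (u \notin VE -> forall w', sigmaD u = Some w' -> w = w') -> w \in D.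
  move=> Hu Huw H.
  pose pi n := if n is n'.+1 then iter n' nxt w else u.
  apply: (HsDcl pi _ _ Hu 1).
  - by case=> [|n] //=; apply: HnE.
  - case=> [|n] w0 /= Hn Hs; first exact: H Hn _ Hs.
    by rewrite /nxt Hs.
pose P u := u \in D \/ exists j, u \in ch j.
have Hstep pi : is_play E pi -> consistent VE (combine sigmaA sigmaD) pi ->
    forall n, P (pi n) -> P (pi n.+1).
  move=> Hp Hc n HP.
  destruct (classic ((exists j, pi n \in ch j) /\ pi n != v)) as [[[j Hj] Hv]|Hno].
    have [r [Hr1 Hr0]] := ch_rank Hj Hv.
    case: (boolP (pi n \in VE)) => HVE.
      case/andP: (ch_step Hr1 Hr0) => _; rewrite HVE /= => /forallP/(_ (pi n.+1))/implyP.
      by move=> /(_ (Hp n)) H; right; exists r.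
    have [w [Hs [_ Hw]]] := HsA.2 r (pi n) HVE Hr1 Hr0.
    have -> : pi n.+1 = w by apply: Hc => //; rewrite /combine Hs.
    by right; exists r.
  have HsAn : sigmaA (pi n) = None.
    case Hs: (sigmaA (pi n)) => [w|] //; exfalso.
    move: (HsA.1 (pi n) ltac:(by rewrite Hs)).
    rewrite !inE => /andP[/andP[Hnv Hat] _].
    by apply: Hno; split; [exists #|V| | ].
  have HnD : pi n \in D.
    case: HP => // [[j Hj]].
    case: (eqVneq (pi n) v) => [->//|Hv]; exfalso; apply: Hno; split=> //.
    by exists j.
  left; apply: (Dstep (pi n) _ HnD (Hp n)).
  by move=> HVE w' Hs; apply: Hc => //; rewrite /combine HsAn.
have Hinv pi : is_play E pi -> consistent VE (combine sigmaA sigmaD) pi ->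
    pi 0 \in D :|: attr E p VE k [set v] -> forall n, P (pi n).
  move=> Hp Hc H0; elim=> [|n IH]; last exact: Hstep.
  move: H0; rewrite inE => /orP[H|H]; [by left | by right; exists #|V|].
have Hprio pi : is_play E pi -> consistent VE (combine sigmaA sigmaD) pi ->
    pi 0 \in D :|: attr E p VE k [set v] -> forall n, k <= p (pi n).
  move=> Hp Hc H0 n; case: (Hinv pi Hp Hc H0 n) => [/HDk//|[j Hj]].
  by case: (ch_prio Hj) => [->|//]; rewrite Hpv.
split; last exact: Hprio.
move=> pi Hp Hc H0.
have reach j : forall n, pi n \in ch j -> exists m, n <= m /\ pi m = v.
  elim: j => [|j IH] n H.
    by rewrite /ch /attr_chain /= inE in H; exists n; split => //; apply/eqP.
  case: (boolP (pi n \in ch j)) => Hj; first exact: IH.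
  have Hn1 : pi n.+1 \in ch j.
    case: (boolP (pi n \in VE)) => HVE.
      case/andP: (ch_step H Hj) => _; rewrite HVE /= => /forallP/(_ (pi n.+1))/implyP.
      by move=> /(_ (Hp n)).
    have [w [Hs [_ Hw]]] := HsA.2 j (pi n) HVE H Hj.
    have -> : pi n.+1 = w by apply: Hc => //; rewrite /combine Hs.
    done.
  have [m [Hm Hmv]] := IH _ Hn1; exists m; split => //; exact: ltnW.
destruct (classic (inf_often pi (fun u => exists j, u \in ch j))) as [Hinf|Hfin].
  exists k; split => //; split.
    move=> N; have [n [HnN [j Hj]]] := Hinf N.
    have [m [Hnm Hm]] := reach j n Hj; exists m; split; last by rewrite Hm.
    exact: leq_trans HnN Hnm.
  move=> j' Hj'; have [n [_ <-]] := Hj' 0; exact: Hprio.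
move/not_all_ex_not: Hfin => [N HN].
have Hnc n : N <= n -> ~ exists j, pi n \in ch j.
  by move=> Hn Hj; apply: HN; exists n.
have HDn n : N <= n -> pi n \in D.
  move=> Hn; case: (Hinv pi Hp Hc H0 n) => // Hj; by case: (Hnc n Hn).
have HsAn n : N <= n -> sigmaA (pi n) = None.
  move=> Hn; case Hs: (sigmaA (pi n)) => [w|] //; exfalso.
  move: (HsA.1 (pi n) ltac:(by rewrite Hs)).
  rewrite !inE => /andP[/andP[Hnv Hat] _].
  by apply: (Hnc n Hn); exists #|V|.
pose pi' i := pi (N + i).
have [m [Hm [Hinf Hmin]]] : odd_wins p pi'.
  apply: HsDwin.
  - by move=> i; rewrite /pi' addnS; apply: Hp.
  - move=> i w Hn Hs; rewrite /pi' addnS; apply: Hc => //.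
    by rewrite /combine HsAn ?leq_addr.
  - by rewrite /pi' addn0; apply: HDn.
exists m; split => //; split.
  move=> N'; have [n [Hn Hpn]] := Hinf N'; exists (N + n); split => //.
  exact: leq_trans Hn (leq_addl N n).
move=> j Hj; apply: Hmin => N'; have [n [Hn Hpn]] := Hj (N + N').
exists (n - N); rewrite /pi' subnKC; last by lia.
split => //; lia.
Qed.
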